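(* Let $\mathfrak{H}$ be a fat indecomposable Hoffman graph with $\lambda_{\min}(\mathfrak{H})\ge-1-\tau$, where $\tau=\frac{1+\sqrt5}{2}$. If some slim vertex of $\mathfrak{H}$ has at least two fat neighbours, then $\mathcal{S}(\mathfrak{H})$ is isomorphic to $\mathcal{Q}_{0,0,1}$ (a single vertex), $\mathcal{Q}_{1,0,1}$ (two vertices joined by a $(+)$-edge), or $\mathcal{Q}_{0,1,1}$ (two vertices joined by a $(-)$-edge); in particular $\mathfrak{H}$ has at most two slim vertices.
   Context: A Hoffman graph $\mathfrak{H}$ is a finite simple graph $H$ together with a labeling of each vertex as slim or fat, such that every fat vertex is adjacent to at least one slim vertex and the fat vertices are pairwise non-adjacent. $V^s(\mathfrak{H})$ denotes the set of slim vertices and $N^f_{\mathfrak{H}}(x)$ the set of fat neighbours of $x$. $\mathfrak{H}$ is fat if every slim vertex has a fat neighbour. An induced Hoffman subgraph is a Hoffman graph whose underlying graph is an induced subgraph with inherited labels. Writing the adjacency matrix of $H$ with fat vertices last as $\begin{pmatrix}A_s & C\\ C^T & O\end{pmatrix}$, set $B(\mathfrak{H})=A_s-CC^T$; $\lambda_{\min}(\mathfrak{H})$ is its smallest eigenvalue. A decomposition of $\mathfrak{H}$ is a family $\{\mathfrak{H}^i\}_{i=1}^n$ of induced Hoffman subgraphs such that: (i) $V(\mathfrak{H})=\bigcup_i V(\mathfrak{H}^i)$; (ii) slim vertex sets of distinct members are disjoint; (iii) if $x\in V^s(\mathfrak{H}^i)$ and $y$ is a fat neighbour of $x$ in $\mathfrak{H}$,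 then $y\in V(\mathfrak{H}^i)$; (iv) if $x\in V^s(\mathfrak{H}^i)$, $y\in V^s(\mathfrak{H}^j)$, $i\neq j$, then $|N^f_{\mathfrak{H}}(x)\cap N^f_{\mathfrak{H}}(y)|\le 1$, with equality iff $x,y$ are adjacent. $\mathfrak{H}$ is indecomposable if it has no decomposition with $n\ge2$. The special graph $\mathcal{S}(\mathfrak{H})$ is the edge-signed graph (edges labelled $+$ or $-$) with vertex set $V^s(\mathfrak{H})$ in which distinct $u,v$ are joined by a $(+)$-edge iff they are adjacent in $\mathfrak{H}$ and have no common fat neighbour, by a $(-)$-edge iff they are non-adjacent in $\mathfrak{H}$ and have a common fat neighbour, and are not joined otherwise; isomorphisms of edge-signed graphs preserve signs. *)

(* Defs.v *)
From HB Require Import structures.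
From mathcomp Require Import all_boot all_order all_algebra.
From mathcomp Require Import algC.
Set Implicit Arguments. Unset Strict Implicit. Unset Printing Implicit Defensive.
Import Order.TTheory GRing.Theory Num.Theory.

Definition hoffman_graph (T : finType) (e : rel T) (fat : pred T) : Prop :=
  [/\ (forall x, ~~ e x x),
      (forall x y, e x y = e y x),
      (forall x y, fat x -> fat y -> ~~ e x y) &
      (forall y, fat y -> exists x, ~~ fat x /\ e x y)].

Definition fat_nbrs (T : finType) (e : rel T) (fat : pred T) (x : T) : {set T} :=
  [set y | fat y && e x y].

Definition common_fat (T : finType) (e : rel T) (fat : pred T) (x y : T) : nat :=
  #|fat_nbrs e fat x :&: fat_nbrs e fat y|.

Definition fat_hoffman (T : finType) (e : rel T) (fat : pred T) : Prop :=
  forall x, ~~ fat x -> exists y, fat y /\ e x y.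

Definition slimT (T : finType) (fat : pred T) := {x : T | ~~ fat x}.
Definition fatT (T : finType) (fat : pred T) := {x : T | fat x}.

Definition As_mx (T : finType) (e : rel T) (fat : pred T) :
  'M[algC]_(#|{: slimT fat}|) :=
  (\matrix_(i, j) (e (val (enum_val i)) (val (enum_val j)))%:R)%R.

Definition C_mx (T : finType) (e : rel T) (fat : pred T) :
  'M[algC]_(#|{: slimT fat}|, #|{: fatT fat}|) :=
  (\matrix_(i, j) (e (val (enum_val i)) (val (enum_val j)))%:R)%R.

Definition B_mx (T : finType) (e : rel T) (fat : pred T) :
  'M[algC]_(#|{: slimT fat}|) :=
  (As_mx e fat - C_mx e fat *m (C_mx e fat)^T)%R.

(* lambda_min(H) >= c : every eigenvalue of the (real symmetric) matrix B is >= c *)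
Definition lambda_min_ge (T : finType) (e : rel T) (fat : pred T) (c : algC) : Prop :=
  forall a : algC, eigenvalue (B_mx e fat) a -> (c <= a)%R.

Definition tau : algC := ((1 + sqrtC 5) / 2)%R.

Definition induced_hoffman_sub (T : finType) (e : rel T) (fat : pred T) (U : {set T}) : Prop :=
  U != set0 /\ (forall y, y \in U -> fat y -> exists2 x, x \in U & ~~ fat x /\ e x y).

Definition is_decomposition (T : finType) (e : rel T) (fat : pred T)
  (n : nat) (U : 'I_n -> {set T}) : Prop :=
  [/\ (forall i, induced_hoffman_sub e fat (U i)),
      (forall v : T, exists i, v \in U i),
      (forall i j x, i != j -> x \in U i -> x \in U j -> fat x),
      (forall i x y, x \in U i -> ~~ fat x -> fat y -> e x y -> y \in U i) &
      (forall i j x y, i != j -> x \in U i -> ~~ fat x -> y \in U j -> ~~ fat y ->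
          common_fat e fat x y <= 1 /\ (common_fat e fat x y == 1) = e x y)].

Definition indecomposable (T : finType) (e : rel T) (fat : pred T) : Prop :=
  ~ exists n (U : 'I_n -> {set T}), 2 <= n /\ is_decomposition e fat U.

Definition sg_pos (T : finType) (e : rel T) (fat : pred T) : rel (slimT fat) :=
  fun u v => [&& val u != val v, e (val u) (val v) & common_fat e fat (val u) (val v) == 0].
Definition sg_neg (T : finType) (e : rel T) (fat : pred T) : rel (slimT fat) :=
  fun u v => [&& val u != val v, ~~ e (val u) (val v) & common_fat e fat (val u) (val v) != 0].

Definition signed_iso (A B : finType) (pA nA : rel A) (pB nB : rel B) : Prop :=
  exists f : A -> B, bijective f /\
    forall x y, pA x y = pB (f x) (f y) /\ nA x y = nB (f x) (f y).

Definition Q001_pos : rel 'I_1 := fun _ _ => false.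
Definition Q001_neg : rel 'I_1 := fun _ _ => false.
Definition Q101_pos : rel 'I_2 := fun x y => x != y.
Definition Q101_neg : rel 'I_2 := fun _ _ => false.
Definition Q011_pos : rel 'I_2 := fun _ _ => false.
Definition Q011_neg : rel 'I_2 := fun x y => x != y.
Arguments sg_pos {T} e fat _ _.
Arguments sg_neg {T} e fat _ _.

(* Main.v *)
Require Import Defs.
From HB Require Import structures.
From mathcomp Require Import all_boot all_order all_algebra.
From mathcomp Require Import algC.
From mathcomp Require Import sesquilinear spectral ring zify.
Import Order.TTheory GRing.Theory Num.Theory.
Set Implicit Arguments. Unset Strict Implicit. Unset Printing Implicit Defensive.
Local Open Scope ring_scope.
Local Open Scope sesquilinear_scope.


Lemma rayleigh n (A : 'M[algC]_n) (c : algC) :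
  A \is hermsymmx -> (forall a, eigenvalue A a -> c <= a) ->
  forall u : 'rV_n, c * (u *m u ^t*) 0 0 <= (u *m A *m u ^t*) 0 0.
Proof.
move=> hA hc u.
have nA := hermitian_normalmx hA.
have PU : spectralmx A \is unitarymx := spectral_unitarymx A.
have Punit := spectral_unit A.
set P := spectralmx A in PU Punit.
have PP : P *m P^t* = 1%:M by apply/unitarymxP.
have eA : A = P^t* *m diag_mx (spectral_diag A) *m P.
  by rewrite -invmx_unitary //; exact/orthomx_spectralP.
set d := spectral_diag A in eA.
have PtP : P^t* *m P = 1%:M by rewrite -invmx_unitary // mulVmx.
have eig : forall i, eigenvalue A (d 0 i).
  move=> i; apply/eigenvalueP; exists (row i P).
    rewrite eA rowE !mulmxA -(mulmxA _ P) PP mulmx1 -(rowE i (diag_mx d)) row_diag_mx.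
    by rewrite -scalemxAl -rowE.
  apply/eqP => h; have := congr1 (fun M => M *m P^t*) h.
  rewrite mul0mx rowE -mulmxA PP mulmx1 => /matrixP/(_ 0 i).
  by rewrite !mxE => /eqP; rewrite pnatr_eq0 !eqxx.
set w := u *m P^t*.
have ew : w ^t* = P *m u ^t*.
  by rewrite /w trmx_mul map_mxM trmxCK.
have -> : u *m A *m u ^t* = w *m diag_mx d *m w^t*.
  by rewrite ew eA /w !mulmxA.
have -> : u *m u ^t* = w *m w^t*.
  by rewrite ew /w !mulmxA -(mulmxA u) PtP mulmx1.
rewrite mul_mx_diag !mxE mulr_sumr; apply: ler_sum => i _.
rewrite !mxE mulrAC mulrC; apply: ler_wpM2l; [exact: mul_conjC_ge0 | exact: hc (eig i)].
Qed.


Lemma tau_bound (N Q : int) : 0 <= N -> (-1 - tau) * N%:~R <= Q%:~R :> algC ->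
  0 <= 131 * N + 50 * Q.
Proof.
move=> hN h.
set s := sqrtC (5 : algC).
have s0 : 0 <= s by rewrite sqrtC_ge0 ler0n.
have hs : 150 + 50 * s <= 262.
  have h1 : 50 * s <= 112.
    rewrite -(ler_pXn2r (n := 2)) //; last 2 first.
    - by rewrite nnegrE mulr_ge0 ?ler0n.
    - by rewrite nnegrE ler0n.
    by rewrite exprMn sqrtCK !expr2 -!natrM ler_nat.
  have -> : (262 : algC) = 150 + 112 by rewrite -natrD.
  by rewrite lerD2l.
have h2 : - (150 + 50 * s) * N%:~R <= 100 * Q%:~R.
  have -> : - (150 + 50 * s) * N%:~R = 100 * ((-1 - tau) * N%:~R).
    by rewrite /tau -/s; field.
  by rewrite ler_pM2l // ltr0n.
have h3 : (-262) * N%:~R <= 100 * Q%:~R :> algC.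
  apply: le_trans h2; rewrite !mulNr lerN2; apply: ler_wpM2r => //.
  by rewrite ler0z.
have : ((-262) * N)%:~R <= (100 * Q)%:~R :> algC.
  by rewrite !intrM.
rewrite ler_int => h4.
lia.
Qed.


Lemma qf_delta n (M : 'M[algC]_n) i j : (('e_i : 'rV_n) *m M *m ('e_j : 'rV_n)^T) = (M i j)%:M.
Proof. by apply/matrixP => x y; rewrite trmx_delta -rowE -colE !mxE !ord1. Qed.

Lemma qf3 n (M : 'M[algC]_n) (a b c : algC) i j k :
  let u : 'rV_n := a *: 'e_i + b *: 'e_j + c *: 'e_k in
  (u *m M *m u^T) 0 0 = a*a*M i i + a*b*M i j + a*c*M i k
     + b*a*M j i + b*b*M j j + b*c*M j k + c*a*M k i + c*b*M k j + c*c*M k k.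
Proof.
move=> u; rewrite /u !linearD /= !linearZ /=.
rewrite !mulmxDl -!scalemxAl !qf_delta !mxE /= mulr1n.

ring.
Qed.



Section G.
Variables (T : finType) (e : rel T) (fat : pred T).

Definition bz (p q : T) : int := (e p q)%:Z - (common_fat e fat p q)%:Z.

Lemma common_card p q :
  common_fat e fat p q = #|[pred x : fatT fat | e p (val x) && e q (val x)]|.
Proof.
rewrite /common_fat.
have -> : fat_nbrs e fat p :&: fat_nbrs e fat q =
   val @: [set x : fatT fat | e p (val x) && e q (val x)].
  apply/setP => y; rewrite !inE; apply/andP/imsetP.
    move=> [/andP[fy epy] /andP[_ eqy]].
    by exists (exist _ y fy : fatT fat) => //; rewrite inE /= epy eqy.
  by move=> [x]; rewrite inE => /andP[h1 h2] ->; rewrite (valP x) h1 h2.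
rewrite card_imset; last exact: val_inj.
by apply: eq_card => x; rewrite inE.
Qed.

Lemma B_entry i j : B_mx e fat i j =
  (bz (val (enum_val i)) (val (enum_val j)))%:~R.
Proof.
rewrite /B_mx /As_mx /C_mx !mxE /bz common_card.
rewrite intrB.
congr (_ - _).

under eq_bigr => k _ do rewrite !mxE.
rewrite -(big_enum_val (A := {: fatT fat})
   (fun x : fatT fat => (e (val (enum_val i)) (val x))%:R * (e (val (enum_val j)) (val x))%:R)) /=.
under eq_bigr => x _ do rewrite -natrM mulnb.
rewrite -natr_sum pmulrn; congr _%:R.
rewrite -sum1_card [RHS]big_mkcond /=; apply: eq_bigr => x _.
by rewrite inE /=; case: (_ && _).
Qed.


Lemma bz_sym (hH : hoffman_graph e fat) p q : bz p q = bz q p.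
Proof.
case: hH => _ hs _ _; rewrite /bz /common_fat hs setIC //.
Qed.

Lemma B_herm (hH : hoffman_graph e fat) : B_mx e fat \is hermsymmx.
Proof.
apply: realsym_hermsym.
  apply/is_hermitianmxP; rewrite expr0 scale1r; apply/matrixP => i j.
  rewrite B_entry mxE /= mxE B_entry bz_sym //.
by apply/mxOverP => i j; rewrite B_entry realz.
Qed.

Lemma key (hH : hoffman_graph e fat) (hl : lambda_min_ge e fat (-1 - tau))
  p q r (hp : ~~ fat p) (hq : ~~ fat q) (hr : ~~ fat r) (a b c : int) :
  (0 <= 131 * (a*a + b*b + c*c + 2*a*b*(p==q)%:Z + 2*a*c*(p==r)%:Z + 2*b*c*(q==r)%:Z)
     + 50 * (a*a*bz p p + b*b*bz q q + c*c*bz r r + 2*a*b*bz p q + 2*a*c*bz p r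
             + 2*b*c*bz q r))%R.
Proof.
set ip := enum_rank (exist _ p hp : slimT fat).
set iq := enum_rank (exist _ q hq : slimT fat).
set ir := enum_rank (exist _ r hr : slimT fat).
have vp : val (enum_val ip) = p by rewrite enum_rankK.
have vq : val (enum_val iq) = q by rewrite enum_rankK.
have vr : val (enum_val ir) = r by rewrite enum_rankK.
have eqi : forall x y (hx : ~~ fat x) (hy : ~~ fat y),
   (enum_rank (exist _ x hx : slimT fat) == enum_rank (exist _ y hy : slimT fat)) = (x == y).
  move=> x y hx hy; apply/eqP/eqP => [/enum_rank_inj/(congr1 val) //|xy].
  by subst y; rewrite (bool_irrelevance hx hy).
set u : 'rV[algC]_#|{: slimT fat}| := a%:~R *: 'e_ip + b%:~R *: 'e_iq + c%:~R *: 'e_ir.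
have ureal : u ^t* = u^T.
  apply: realmxC; apply/mxOverP => x y; rewrite !mxE.
  by rewrite !rpredD ?rpredM ?realz ?realn.
have := rayleigh (B_herm hH) hl u.
have hN : 0 <= (u *m u ^t*) 0 0.
  by rewrite mxE; apply: sumr_ge0 => j _; rewrite !mxE mul_conjC_ge0.
rewrite ureal in hN *.
have eN : (u *m u^T) 0 0 = (u *m 1%:M *m u^T) 0 0 by rewrite mulmx1.
rewrite eN in hN *.
rewrite !qf3 in hN *.
rewrite !B_entry vp vq vr !mxE in hN *.
rewrite /ip /iq /ir !eqi !eqxx ![q == p]eq_sym ![r == p]eq_sym ![r == q]eq_sym in hN *.
rewrite [bz q p](bz_sym hH) [bz r p](bz_sym hH) [bz r q](bz_sym hH) in hN *.
move=> h; apply: tau_bound.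
  rewrite -(ler_int algC) (_ : (0:int)%:~R = 0) //; apply: le_trans hN _; rewrite le_eqVlt; apply/orP; left; apply/eqP.
  rewrite !(intrD, intrM) -!pmulrn; case: (p == q); case: (p == r); case: (q == r); rewrite /= ?mulr1n ?mulr0n; ring.
apply: le_trans (le_trans _ h) _; rewrite le_eqVlt; apply/orP; left; apply/eqP.
  congr (_ * _); rewrite !(intrD, intrM) -!pmulrn; case: (p == q); case: (p == r); case: (q == r); rewrite /= ?mulr1n ?mulr0n; ring.
rewrite !(intrD, intrM) -!pmulrn; case: (p == q); case: (p == r); case: (q == r); rewrite /= ?mulr1n ?mulr0n; ring.
Qed.

Definition deg p := #|fat_nbrs e fat p|.

Lemma bz_diag (hH : hoffman_graph e fat) p : bz p p = - (deg p)%:Z.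
Proof.
case: hH => hirr _ _ _; rewrite /bz /common_fat setIid (negbTE (hirr p)).
by rewrite /deg add0r.
Qed.

Lemma common_le p q : (common_fat e fat p q <= deg p)%N.
Proof. by rewrite /common_fat /deg subset_leq_card // subsetIl. Qed.

Lemma bz_lo p q : (- (deg p)%:Z <= bz p q)%R.
Proof.
rewrite /bz; have := common_le p q; case: (e p q) => /= h; lia.
Qed.

Lemma bz_hi p q : (bz p q <= 1)%R.
Proof. rewrite /bz; case: (e p q) => /=; lia. Qed.

Lemma deg_pos (hF : fat_hoffman e fat) p : ~~ fat p -> (0 < deg p)%N.
Proof.
move=> /hF [y [fy ey]]; rewrite /deg card_gt0; apply/set0Pn; exists y.
by rewrite inE fy ey.
Qed.

End G.

Section G2.
Variables (T : finType) (e : rel T) (fat : pred T).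
Hypothesis hH : hoffman_graph e fat.
Hypothesis hF : fat_hoffman e fat.
Hypothesis hl : lambda_min_ge e fat (-1 - tau).

Local Notation bz := (bz e fat).
Local Notation deg := (deg e fat).

Lemma deg_le2 p : ~~ fat p -> (deg p <= 2)%N.
Proof.
move=> hp; have := key hH hl hp hp hp 1 0 0.
rewrite !eqxx bz_diag //= => h; lia.
Qed.

Lemma F1 w y : ~~ fat w -> ~~ fat y -> deg w = 2%N -> y != w -> bz w y != 0 ->
  deg y = 1%N /\ (bz w y = 1 \/ bz w y = -1).
Proof.
move=> hw hy dw yw nz.
have h1 := key hH hl hw hy hw 1 1 0.
have h2 := key hH hl hw hy hw 1 (-1) 0.
rewrite eq_sym (negbTE yw) eqxx !bz_diag // dw in h1 h2.
have := deg_le2 hy; have := deg_pos hF hy; have := bz_lo e fat y w.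
have := bz_hi e fat w y; rewrite (bz_sym hH y w).
move: nz; move: (bz w y) h1 h2 => b h1 h2 nz.
move: (deg y) h1 h2 => d h1 h2 hlo hhi dpos dle.
rewrite /= in h1 h2; lia.
Qed.

Lemma F2 x y z : ~~ fat x -> ~~ fat y -> ~~ fat z -> deg x = 2%N ->
  y != x -> z != x -> z != y -> bz x y != 0 -> bz x z != 0 -> False.
Proof.
move=> hx hy hz dx yx zx zy nzy nzz.
have [dy hy1] := F1 hx hy dx yx nzy.
have [dz hz1] := F1 hx hz dx zx nzz.
have h1 := key hH hl hx hy hz 2 1 1.
have h2 := key hH hl hx hy hz 2 1 (-1).
have h3 := key hH hl hx hy hz 2 (-1) 1.
have h4 := key hH hl hx hy hz 2 (-1) (-1).
have lo := bz_lo e fat y z; have hi := bz_hi e fat y z.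
rewrite eq_sym (negbTE yx) eq_sym (negbTE zx) eq_sym (negbTE zy) !bz_diag // dx dy dz in h1 h2 h3 h4 lo.
move: (bz x y) (bz x z) (bz y z) hy1 hz1 h1 h2 h3 h4 lo hi => a b c.
rewrite /=; lia.
Qed.

Lemma F3 x y z : ~~ fat x -> ~~ fat y -> ~~ fat z -> deg x = 2%N ->
  y != x -> z != x -> z != y -> bz x y != 0 -> bz y z != 0 -> False.
Proof.
move=> hx hy hz dx yx zx zy nzy nyz.
have xz0 : bz x z = 0.
  by apply/eqP; apply: contraT => nzz; case: (F2 hx hy hz dx yx zx zy nzy nzz).
have [dy hy1] := F1 hx hy dx yx nzy.
have := deg_le2 hz; have := deg_pos hF hz.
have lo := bz_lo e fat y z; have hi := bz_hi e fat y z.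
have h1 := key hH hl hx hy hz 2 (-2) 1.
have h2 := key hH hl hx hy hz 2 (-2) (-1).
have h3 := key hH hl hx hy hz 2 2 (-1).
have h4 := key hH hl hx hy hz 2 2 1.
have h5 := key hH hl hx hy hz 1 (-1) 1.
have h6 := key hH hl hx hy hz 1 (-1) (-1).
have h7 := key hH hl hx hy hz 1 1 (-1).
have h8 := key hH hl hx hy hz 1 1 1.
rewrite eq_sym (negbTE yx) eq_sym (negbTE zx) eq_sym (negbTE zy) !bz_diag // dx dy xz0 in h1 h2 h3 h4 h5 h6 h7 h8 lo.
move: nyz; move: (bz x y) (bz y z) (deg z) hy1 h1 h2 h3 h4 h5 h6 h7 h8 lo hi => a c d.
rewrite /=; lia.
Qed.

Lemma ord2_ne (i j : 'I_2) : i != j -> (j == ord0) = ~~ (i == ord0).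
Proof. by case: i => [[|[|//]] ?]; case: j => [[|[|//]] ?]. Qed.

Definition Ub (P : pred T) (b : bool) : {set T} :=
  [set v | (~~ fat v && (P v == b)) || (fat v && [exists p, ~~ fat p && (P p == b) && e p v])].

Lemma no_split (P : pred T) : indecomposable e fat ->
  (exists a, ~~ fat a && P a) -> (exists w, ~~ fat w && ~~ P w) ->
  (forall p q, ~~ fat p -> ~~ fat q -> P p -> ~~ P q -> bz p q = 0) -> False.
Proof.
move=> hI [a /andP[fa Pa]] [w /andP[fw Pw]] hc.
case: (hH) => hirr hsym hff hfs.
apply: hI; exists 2%N, (fun i : 'I_2 => Ub P (i == ord0)); split => //.
split.
- move=> i; split.
    apply/set0Pn; case: (i == ord0).
      by exists a; rewrite inE fa Pa.
    by exists w; rewrite inE fw (negbTE Pw).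
  move=> y; rewrite inE => /orP[/andP[nf _]|/andP[_ /existsP[p /andP[/andP[fp Pp] epy]]]] fy.
    by rewrite fy in nf.
  by exists p => //; rewrite inE fp Pp.
- move=> v; case fv: (fat v).
    have [x' [fx' ex']] := hfs v fv.
    exists (if P x' then ord0 else ord_max); rewrite inE fv /=; apply/existsP; exists x'.
    by rewrite fx' ex' andbT; case: (P x').
  by exists (if P v then ord0 else ord_max); rewrite inE fv /=; case: (P v).
- move=> i j x ij; rewrite !inE; case: (fat x) => //=; rewrite !orbF (ord2_ne ij).
  by case: (P x); case: (i == ord0).
- move=> i x y; rewrite !inE => /orP[/andP[_ Px]|/andP[fx _]] hx fy exy; last by rewrite fx in hx.
  by rewrite fy /=; apply/existsP; exists x; rewrite hx Px exy.
- move=> i j x y ij; rewrite !inE => /orP[/andP[_ Px]|/andP[fx _]] hx; last by rewrite fx in hx.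
  move=> /orP[/andP[_ Py]|/andP[fy _]] hy; last by rewrite fy in hy.
  rewrite (ord2_ne ij) in Py.
  have b0 : bz x y = 0.
    move: Px Py; case: (i == ord0); case Px: (P x); case Py: (P y) => //= _ _.
      by apply: hc => //; rewrite Py.
    by rewrite (bz_sym hH); apply: hc => //; rewrite Px.
  move: b0; rewrite /bz; case: (e x y) => /= h.
    by have -> : common_fat e fat x y = 1%N by lia.
  by have -> : common_fat e fat x y = 0%N by lia.
Qed.

Lemma main_sec : indecomposable e fat ->
  (exists x, ~~ fat x /\ (2 <= #|fat_nbrs e fat x|)%N) ->
  (signed_iso (sg_pos e fat) (sg_neg e fat) Q001_pos Q001_neg \/
   signed_iso (sg_pos e fat) (sg_neg e fat) Q101_pos Q101_neg \/
   signed_iso (sg_pos e fat) (sg_neg e fat) Q011_pos Q011_neg) /\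
  (#|[set x | ~~ fat x]| <= 2)%N.
Proof.
move=> hI [x [fx dx2]].
have dx : deg x = 2%N by have := deg_le2 fx; move: dx2; rewrite -/(deg x); lia.
pose P := fun p => (p == x) || (bz x p != 0).
have allP : forall p, ~~ fat p -> P p.
  move=> p fp; apply/negPn/negP => nP.
  apply: (@no_split P hI).
  - by exists x; rewrite fx /P eqxx.
  - by exists p; rewrite fp nP.
  move=> p' q fp' fq Pp nPq; rewrite /P negb_or negbK in nPq.
  case/andP: nPq => qx bq.
  case: (eqVneq p' x) => [->|p'x]; first exact/eqP.
  have bp : bz x p' != 0 by move: Pp; rewrite /P (negbTE p'x).
  have qp : q != p' by apply: contraTneq bq => ->.
  by apply/eqP; apply: contraT => nz; case: (F3 fx fp' fq dx p'x qx qp bp nz).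
case: (pickP (fun y => ~~ fat y && (y != x))) => [y /andP[fy yx] | none].
  have bxy : bz x y != 0 by move: (allP y fy); rewrite /P (negbTE yx).
  have [dy hb] := F1 fx fy dx yx bxy.
  have only : forall z, ~~ fat z -> z = x \/ z = y.
    move=> z fz; case: (eqVneq z x) => [->|zx]; first by left.
    case: (eqVneq z y) => [->|zy]; first by right.
    have bxz : bz x z != 0 by move: (allP z fz); rewrite /P (negbTE zx).
    by case: (F2 fx fy fz dx yx zx zy bxy bxz).
  split; last first.
    apply: leq_trans (subset_leq_card (_ : _ \subset [set x; y])) _.
      by apply/subsetP => z; rewrite !inE => fz; case: (only z fz) => ->; rewrite eqxx ?orbT.
    by rewrite cards2; case: (x != y).
  have exy : e y x = e x y by case: hH => _ hs _ _; rewrite hs.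
  have cxy : common_fat e fat y x = common_fat e fat x y by rewrite /common_fat setIC.
  have cle : (common_fat e fat x y <= 1)%N by rewrite -cxy -dy common_le.
  pose sx : slimT fat := exist _ x fx.
  pose sy : slimT fat := exist _ y fy.
  have su : forall u : slimT fat, u = sx \/ u = sy.
    case=> z fz; case: (only z fz) => ?; subst z; [left|right]; congr exist; exact: bool_irrelevance.
  pose f := fun u : slimT fat => if val u == x then (ord0 : 'I_2) else ord_max.
  have bf : bijective f.
    exists (fun i : 'I_2 => if i == ord0 then sx else sy).
      by move=> u; case: (su u) => ->; rewrite /f /= ?eqxx // (negbTE yx).
    by case=> [[|[|//]] ?] /=; apply: val_inj; rewrite /f /= ?eqxx // (negbTE yx).
  have xy : x != y by rewrite eq_sym.
  right; case: hb => hb.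
    have [ex cx] : e x y /\ common_fat e fat x y = 0%N.
      by move: hb; rewrite /bz; case: (e x y) => /= h; split => //; lia.
    left; exists f; split => // u v.
    case: (su u) => ->; case: (su v) => ->;
      by rewrite /sg_pos /sg_neg /f /= ?eqxx ?(negbTE yx) ?(negbTE xy) ?exy ?cxy ?ex ?cx.
  have [ex cx] : e x y = false /\ common_fat e fat x y = 1%N.
    by move: hb cle; rewrite /bz; case: (e x y) => /= h; split => //; lia.
  right; exists f; split => // u v.
  case: (su u) => ->; case: (su v) => ->;
    by rewrite /sg_pos /sg_neg /f /= ?eqxx ?(negbTE yx) ?(negbTE xy) ?exy ?cxy ?ex ?cx.
have only : forall z, ~~ fat z -> z = x.
  by move=> z fz; move: (none z); rewrite fz /= => /negbFE/eqP.
split; last first.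
  apply: leq_trans (subset_leq_card (_ : _ \subset [set x])) _.
    by apply/subsetP => z; rewrite !inE => fz; rewrite (only z fz).
  by rewrite cards1.
left; exists (fun _ => ord0); split.
  exists (fun _ => exist _ x fx : slimT fat).
    by move=> u; apply: val_inj => /=; case: u => z fz /=; rewrite (only z fz).
  by move=> i; apply: val_inj; case: i => [[|//] ?].
move=> u v; rewrite /sg_pos /sg_neg; case: u => z fz; case: v => w fw /=.
by rewrite (only z fz) (only w fw) eqxx.
Qed.

End G2.

Local Close Scope sesquilinear_scope.
Local Close Scope ring_scope.
Unset Implicit Arguments.

Theorem mainTheorem10 (T : finType) (e : rel T) (fat : pred T) :
  hoffman_graph e fat ->
  fat_hoffman e fat ->
  indecomposable e fat ->
  lambda_min_ge e fat (- 1 - tau)%R ->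
  (exists x, ~~ fat x /\ 2 <= #|fat_nbrs e fat x|) ->
  (signed_iso (sg_pos e fat) (sg_neg e fat) Q001_pos Q001_neg \/
   signed_iso (sg_pos e fat) (sg_neg e fat) Q101_pos Q101_neg \/
   signed_iso (sg_pos e fat) (sg_neg e fat) Q011_pos Q011_neg) /\
  #|[set x | ~~ fat x]| <= 2.
Proof.
move=> hH hF hI hl hx.
exact: (main_sec hH hF hl hI hx).
Qed.
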